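(* Let $x_1,\dots,x_N\in\mathbb{R}^q$, let $d:\mathbb{R}^q\times\mathbb{R}^q\to\mathbb{R}_{\ge 0}$ be any function, and let $k:\mathbb{R}_{\ge0}\to\mathbb{R}_{\ge0}$ be convex, non-increasing and differentiable, with $g=-k'$. Set $f(x)=\sum_{i=1}^N k(d(x,x_i))$. Let $(\hat x_n)_{n\ge0}$ satisfy: $\hat x_0\in\mathbb{R}^q$ arbitrary and, for each $n$, $\hat x_{n+1}\in\operatorname{argmin}_{x\in\mathbb{R}^q}\sum_{i=1}^N g(d(\hat x_n,x_i))\,d(x,x_i)$ (assume these minimizers exist). Then the sequence $n\mapsto f(\hat x_n)$ is non-decreasing and bounded above, hence convergent. *)

(* Defs.v *)
From Stdlib Require Import Reals List.
Open Scope R_scope.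

Definition Rq (q : nat) : Type := { v : list R | length v = q }.

(* rsum N F = F 0 + ... + F (N-1)  (N terms; 0 if N = 0) *)
Fixpoint rsum (N : nat) (F : nat -> R) : R :=
  match N with
  | O => 0
  | S n => rsum n F + F n
  end.

Definition convex_nonneg (k : R -> R) : Prop :=
  forall x y t, 0 <= x -> 0 <= y -> 0 <= t <= 1 ->
    k (t * x + (1 - t) * y) <= t * k x + (1 - t) * k y.

Definition nonincreasing_nonneg (k : R -> R) : Prop :=
  forall x y, 0 <= x -> x <= y -> k y <= k x.

(* k is differentiable on [0, +oo) (derivative within [0,+oo), i.e. one-sided
   at 0) with derivative k' *)
Definition deriv_on_nonneg (k k' : R -> R) : Prop :=
  forall t, 0 <= t -> forall eps, 0 < eps -> exists delta, 0 < delta /\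
    forall h, h <> 0 -> 0 <= t + h -> Rabs h < delta ->
      Rabs ((k (t + h) - k t) / h - k' t) < eps.

(* Main.v *)
Require Import Defs.
From Stdlib Require Import Reals List Lra.
Open Scope R_scope.

Lemma rsum_le N F G : (forall i, F i <= G i) -> rsum N F <= rsum N G.
Proof. intros H; induction N; simpl; [lra| specialize (H N); lra]. Qed.

Lemma rsum_minus N F G : rsum N (fun i => F i - G i) = rsum N F - rsum N G.
Proof. induction N; simpl; [lra| rewrite IHN; lra]. Qed.

Lemma tangent (k g : R -> R)
  (Hconv : convex_nonneg k)
  (Hderiv : deriv_on_nonneg k (fun t => - g t)) a b :
  0 <= a -> 0 <= b -> k a + g a * (a - b) <= k b.
Proof.
  intros Ha Hb.
  destruct (Req_dec b a) as [E|E]. { subst; lra. }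
  apply Rnot_lt_le; intro Hlt.
  set (D := k a + g a * (a - b) - k b).
  assert (HD : 0 < D) by (unfold D; lra).
  assert (Hba : 0 < Rabs (b - a)) by (apply Rabs_pos_lt; lra).
  destruct (Hderiv a Ha (D / (2 * Rabs (b - a)))) as [delta [Hdel Hh]].
  { apply Rdiv_lt_0_compat; lra. }
  set (t := Rmin (1/2) (delta / (2 * Rabs (b - a)))).
  assert (Ht0 : 0 < t).
  { unfold t; apply Rmin_glb_lt; [lra| apply Rdiv_lt_0_compat; lra]. }
  assert (Ht1 : t <= 1/2) by apply Rmin_l.
  assert (Ht2 : t <= delta / (2 * Rabs (b - a))) by apply Rmin_r.
  set (h := t * (b - a)).
  assert (Hh0 : h <> 0).
  { unfold h; intro Z; apply Rmult_integral in Z; destruct Z; lra. }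
  assert (Hah : 0 <= a + h).
  { replace (a + h) with ((1 - t) * a + t * b) by (unfold h; ring).
    apply Rplus_le_le_0_compat; apply Rmult_le_pos; lra. }
  assert (Hhd : Rabs h < delta).
  { unfold h; rewrite Rabs_mult, (Rabs_right t) by lra.
    apply Rle_lt_trans with (delta / (2 * Rabs (b - a)) * Rabs (b - a)).
    - apply Rmult_le_compat_r; [apply Rabs_pos| lra].
    - field_simplify; lra. }
  specialize (Hh h Hh0 Hah Hhd).
  set (s := (k (a + h) - k a) / h) in *.
  assert (Hc := Hconv b a t Hb Ha ltac:(lra)).
  replace (t * b + (1 - t) * a) with (a + h) in Hc by (unfold h; ring).
  assert (Hs : s * (b - a) <= k b - k a).
  { unfold s, h.
    replace ((k (a + t * (b - a)) - k a) / (t * (b - a)) * (b - a))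
      with ((k (a + t * (b - a)) - k a) / t) by (field; lra).
    apply Rmult_le_reg_l with t; [lra|].
    replace (t * ((k (a + t * (b - a)) - k a) / t)) with
      (k (a + t * (b - a)) - k a) by (field; lra).
    fold h; lra. }
  assert (Hm : Rabs ((s - - g a) * (b - a)) < D / 2).
  { rewrite Rabs_mult.
    apply Rlt_le_trans with (D / (2 * Rabs (b - a)) * Rabs (b - a)).
    - apply Rmult_lt_compat_r; auto.
    - right; field; lra. }
  apply Rabs_def2 in Hm. unfold D in *. nra.
Qed.

Theorem proposition1 (q N : nat) (xs : nat -> Rq q) (d : Rq q -> Rq q -> R)
  (k g : R -> R) (xh : nat -> Rq q)
  (Hd : forall x y, 0 <= d x y)
  (Hk0 : forall t, 0 <= t -> 0 <= k t)
  (Hconv : convex_nonneg k)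
  (Hmono : nonincreasing_nonneg k)
  (Hderiv : deriv_on_nonneg k (fun t => - g t))
  (Hstep : forall n (y : Rq q),
      rsum N (fun i => g (d (xh n) (xs i)) * d (xh (S n)) (xs i))
      <= rsum N (fun i => g (d (xh n) (xs i)) * d y (xs i))) :
  let f := fun x : Rq q => rsum N (fun i => k (d x (xs i))) in
  (forall n, f (xh n) <= f (xh (S n))) /\
  (exists M, forall n, f (xh n) <= M) /\
  (exists l, Un_cv (fun n => f (xh n)) l).
Proof.
  intros f.
  assert (Hinc : forall n, f (xh n) <= f (xh (S n))).
  { intro n; unfold f.
    assert (H1 := Hstep n (xh n)).
    assert (H2 : rsum N (fun i => k (d (xh n) (xs i))
        + (g (d (xh n) (xs i)) * d (xh n) (xs i)
           - g (d (xh n) (xs i)) * d (xh (S n)) (xs i)))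
        <= rsum N (fun i => k (d (xh (S n)) (xs i)))).
    { apply rsum_le; intro i.
      pose proof (tangent k g Hconv Hderiv _ _ (Hd (xh n) (xs i)) (Hd (xh (S n)) (xs i))).
      lra. }
    assert (E : forall F G H : nat -> R,
      rsum N (fun i => F i + (G i - H i)) = rsum N F + (rsum N G - rsum N H)).
    { intros F G H; clear; induction N; simpl; [lra| rewrite IHN; lra]. }
    rewrite E in H2. lra. }
  assert (Hb : forall n, f (xh n) <= rsum N (fun _ => k 0)).
  { intro n; unfold f; apply rsum_le; intro i; apply Hmono; [lra| apply Hd]. }
  split; [exact Hinc|]. split; [eexists; exact Hb|].
  assert (Hg : Un_growing (fun n => f (xh n))) by (intro n; apply Hinc).
  assert (Hbd : bound (EUn (fun n => f (xh n)))).
  { exists (rsum N (fun _ => k 0)); intros x [n ->]; apply Hb. }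
  destruct (growing_cv _ Hg Hbd) as [l Hl]; exists l; exact Hl.
Qed.
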